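(* Let $\lambda_0,\dots,\lambda_n\in\mathbb{C}$, $n\ge1$, $a\neq b$ real, and suppose $E_{(\lambda_0,\dots,\lambda_n)}$ and $E_{(\lambda_0,\dots,\lambda_{n-1})}$ are extended Chebyshev systems for $\{a,b\}$. For $k=0,\dots,n-1$ let $$d_k:=\lim_{x\to b}\frac{\frac{d}{dx}p_{(\lambda_0,\dots,\lambda_n),k}(x)}{p_{(\lambda_0,\dots,\lambda_{n-1}),k}(x)}$$ (these limits exist and are nonzero). Then for all $x\in\mathbb{R}$ $$e^{(x-a)\lambda_n}=p_{(\lambda_0,\dots,\lambda_n),0}(x)+\sum_{k=1}^n(-1)^k d_0\cdots d_{k-1}\,p_{(\lambda_0,\dots,\lambda_n),k}(x),$$ and for $k=1,\dots,n-1$, $$d_0\cdots d_{k-1}=(-1)^n\frac{e^{(b-a)\lambda_n}}{p_{(\lambda_0,\dots,\lambda_n),n}(b)}\cdot\frac{1}{d_k\cdots d_{n-1}}.$$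
   Context: $E_{(\lambda_0,\dots,\lambda_m)}$ denotes the space of all $f\in C^\infty(\mathbb{R},\mathbb{C})$ with $(\frac{d}{dx}-\lambda_0)\cdots(\frac{d}{dx}-\lambda_m)f=0$ (dimension $m+1$). A zero of order (exactly) $k$ at $a$ means $f(a)=\dots=f^{(k-1)}(a)=0$, $f^{(k)}(a)\neq0$. $E_{(\lambda_0,\dots,\lambda_m)}$ is an extended Chebyshev system for $A\subset\mathbb{R}$ if every nonzero element has at most $m$ zeros in $A$ counted with multiplicity. In that case, for $A=\{a,b\}$, $a\ne b$, the Bernstein basis $p_{(\lambda_0,\dots,\lambda_m),k}$, $k=0,\dots,m$, is the unique family in $E_{(\lambda_0,\dots,\lambda_m)}$ with $p_{(\lambda_0,\dots,\lambda_m),k}$ having a zero of order exactly $k$ at $a$ and exactly $m-k$ at $b$, and $p^{(k)}_{(\lambda_0,\dots,\lambda_m),k}(a)=1$. *)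

(* Defs.v *)
From Stdlib Require Import Reals Lra List.
Open Scope R_scope.

Record Cx := mkC { Re : R; Im : R }.

Definition Czero : Cx := mkC 0 0.
Definition Cone : Cx := mkC 1 0.
Definition RtoC (r : R) : Cx := mkC r 0.
Definition Cadd (z w : Cx) : Cx := mkC (Re z + Re w) (Im z + Im w).
Definition Copp (z : Cx) : Cx := mkC (- Re z) (- Im z).
Definition Csub (z w : Cx) : Cx := Cadd z (Copp w).
Definition Cmul (z w : Cx) : Cx :=
  mkC (Re z * Re w - Im z * Im w) (Re z * Im w + Im z * Re w).
Definition Cinv (z : Cx) : Cx :=
  let r := Re z * Re z + Im z * Im z in mkC (Re z / r) (- Im z / r).
Definition Cdiv (z w : Cx) : Cx := Cmul z (Cinv w).
Definition Cmod (z : Cx) : R := sqrt (Re z * Re z + Im z * Im z).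
Definition Cexp (z : Cx) : Cx :=
  mkC (exp (Re z) * cos (Im z)) (exp (Re z) * sin (Im z)).
Fixpoint Cpow (z : Cx) (n : nat) : Cx :=
  match n with O => Cone | S n' => Cmul z (Cpow z n') end.

Fixpoint Csum (f : nat -> Cx) (n : nat) : Cx :=
  match n with O => Czero | S n' => Cadd (Csum f n') (f n') end.
Fixpoint Cprod_from (d : nat -> Cx) (i len : nat) : Cx :=
  match len with O => Cone | S l => Cmul (d i) (Cprod_from d (S i) l) end.

Definition is_derivC (f f' : R -> Cx) : Prop :=
  forall x, derivable_pt_lim (fun t => Re (f t)) x (Re (f' x)) /\
            derivable_pt_lim (fun t => Im (f t)) x (Im (f' x)).

(** [D] is a chain of successive derivatives: D k is the k-th derivative of D 0.
    A function f is Cx^infinity iff such a chain with D 0 = f exists (and then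
    it is unique). *)
Definition deriv_chain (D : nat -> R -> Cx) : Prop :=
  forall k, is_derivC (D k) (D (S k)).

(** Applying (d/dx - l) to the chain of derivatives of f gives the chain of
    derivatives of f' - l f. *)
Definition shift_op (l : Cx) (D : nat -> R -> Cx) : nat -> R -> Cx :=
  fun k x => Csub (D (S k) x) (Cmul l (D k x)).

(** [apply_ops [l0;...;lm] D] = (d/dx - l0) ... (d/dx - lm) applied to D. *)
Definition apply_ops (ls : list Cx) (D : nat -> R -> Cx) : nat -> R -> Cx :=
  fold_right shift_op D ls.

Definition in_E (ls : list Cx) (D : nat -> R -> Cx) : Prop :=
  deriv_chain D /\ forall x, apply_ops ls D 0%nat x = Czero.

Definition lams (l : nat -> Cx) (m : nat) : list Cx := map l (seq 0 (S m)).

(** Extended Chebyshev system for A: E_ls has dimension m+1 = length ls, and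
    every nonzero element has at most m zeros in A counted with multiplicity. *)
Definition ECT (ls : list Cx) (A : R -> Prop) : Prop :=
  forall D : nat -> R -> Cx, in_E ls D ->
    (exists x, D 0%nat x <> Czero) ->
    forall (pts : list R) (mult : R -> nat),
      NoDup pts -> (forall x, In x pts -> A x) ->
      (forall x, In x pts -> forall j, (j < mult x)%nat -> D j x = Czero) ->
      (list_sum (map mult pts) <= length ls - 1)%nat.

Definition zero_order (D : nat -> R -> Cx) (a : R) (k : nat) : Prop :=
  (forall j, (j < k)%nat -> D j a = Czero) /\ D k a <> Czero.

(** P k (a chain of derivatives) describes the Bernstein basis element
    p_{ls,k} = P k 0, for k = 0..m. *)
Definition bernstein_basis (ls : list Cx) (a b : R) (P : nat -> nat -> R -> Cx) : Prop :=
  let m := (length ls - 1)%nat in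
  forall k, (k <= m)%nat ->
    in_E ls (P k) /\ zero_order (P k) a k /\ zero_order (P k) b (m - k) /\
    P k k a = Cone.

Definition Clim (g : R -> Cx) (b : R) (l : Cx) : Prop :=
  forall eps, 0 < eps -> exists delta, 0 < delta /\
    forall x, x <> b -> Rabs (x - b) < delta -> Cmod (Csub (g x) l) < eps.

(* Main.v *)
Require Import Defs.
From Stdlib Require Import Reals Lra Lia List Classical Factorial.
Open Scope R_scope.

Lemma Cext (z w : Cx) : Re z = Re w -> Im z = Im w -> z = w.
Proof. destruct z, w; simpl; intros; subst; reflexivity. Qed.

Ltac Ceq := apply Cext; simpl; ring.

Lemma Cnz_norm (z : Cx) : z <> Czero -> Re z * Re z + Im z * Im z <> 0.
Proof.
  intros H E; apply H. destruct z as [p q]; simpl in *.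
  assert (p = 0) by nra. assert (q = 0) by nra. subst. reflexivity.
Qed.

Lemma Cmul_inv_r (z : Cx) : z <> Czero -> Cmul z (Cinv z) = Cone.
Proof.
  intros H. pose proof (Cnz_norm z H). destruct z as [p q]; simpl in *.
  apply Cext; simpl; field; auto.
Qed.

Lemma Cmul_assoc (x y z : Cx) : Cmul (Cmul x y) z = Cmul x (Cmul y z).
Proof. Ceq. Qed.
Lemma Cmul_comm (x y : Cx) : Cmul x y = Cmul y x.
Proof. Ceq. Qed.
Lemma Cmul_1_l (x : Cx) : Cmul Cone x = x.
Proof. Ceq. Qed.
Lemma Cmul_1_r (x : Cx) : Cmul x Cone = x.
Proof. Ceq. Qed.
Lemma Cmul_0_r (x : Cx) : Cmul x Czero = Czero.
Proof. Ceq. Qed.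

Lemma Cmul_nz (x y : Cx) : x <> Czero -> y <> Czero -> Cmul x y <> Czero.
Proof.
  intros Hx Hy E. apply Hy.
  rewrite <- (Cmul_1_l y), <- (Cmul_inv_r x Hx).
  rewrite (Cmul_comm x), Cmul_assoc, E. apply Cmul_0_r.
Qed.

Lemma Cinv_nz (x : Cx) : x <> Czero -> Cinv x <> Czero.
Proof.
  intros Hx E. pose proof (Cmul_inv_r x Hx). rewrite E, Cmul_0_r in H.
  unfold Czero, Cone in H. injection H. lra.
Qed.

Lemma Cdiv_mul_cancel (x p : Cx) : p <> Czero -> Cdiv (Cmul x p) p = x.
Proof.
  intros Hp. unfold Cdiv. rewrite Cmul_assoc, Cmul_inv_r by auto. apply Cmul_1_r.
Qed.

Lemma Csub_eq0 (u v : Cx) : Csub u v = Czero -> u = v.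
Proof.
  destruct u, v; unfold Csub, Cadd, Copp, Czero; simpl; intros H; injection H; intros.
  apply Cext; simpl; lra.
Qed.

Lemma sign_sq n : Cmul (Cpow (Copp Cone) n) (Cpow (Copp Cone) n) = Cone.
Proof.
  induction n; simpl. Ceq.
  transitivity (Cmul (Cmul (Copp Cone) (Copp Cone)) (Cmul (Cpow (Copp Cone) n) (Cpow (Copp Cone) n))).
  Ceq. rewrite IHn. Ceq.
Qed.

Lemma Cprod_nz d s l : (forall i, (s <= i < s + l)%nat -> d i <> Czero) -> Cprod_from d s l <> Czero.
Proof.
  revert s; induction l; intros s H; simpl.
  - unfold Cone, Czero; intro E; injection E; lra.
  - apply Cmul_nz. apply H; lia. apply IHl. intros; apply H; lia.
Qed.

Lemma Cprod_split d s k l : Cprod_from d s (k + l) = Cmul (Cprod_from d s k) (Cprod_from d (s + k) l).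
Proof.
  revert s; induction k; intros s; simpl.
  - rewrite Nat.add_0_r, Cmul_1_l; reflexivity.
  - rewrite IHk, Cmul_assoc. replace (S s + k)%nat with (s + S k)%nat by lia. reflexivity.
Qed.

Lemma Cprod_last d s l : Cprod_from d s (S l) = Cmul (Cprod_from d s l) (d (s + l)%nat).
Proof.
  replace (S l) with (l + 1)%nat by lia. rewrite Cprod_split. simpl. rewrite Cmul_1_r. reflexivity.
Qed.

Lemma Csum_ext f g N : (forall i, (i < N)%nat -> f i = g i) -> Csum f N = Csum g N.
Proof.
  induction N; intros H; simpl; auto. rewrite IHN, H; auto.
Qed.

Lemma Csum_zero f N : (forall i, (i < N)%nat -> f i = Czero) -> Csum f N = Czero.
Proof.
  induction N; intros H; simpl; auto. rewrite IHN, H; auto. Ceq.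
Qed.

Lemma dpl_ext f g x l l' : (forall t, f t = g t) -> l = l' -> derivable_pt_lim f x l -> derivable_pt_lim g x l'.
Proof.
  intros H El D eps He. destruct (D eps He) as [del Hd]. exists del. intros h Hh Hl.
  rewrite <- !H, <- El. auto.
Qed.

Lemma dpl_lin4 f1 f2 f3 f4 x l1 l2 l3 l4 c1 c2 c3 c4 :
  derivable_pt_lim f1 x l1 -> derivable_pt_lim f2 x l2 ->
  derivable_pt_lim f3 x l3 -> derivable_pt_lim f4 x l4 ->
  derivable_pt_lim (fun t => c1 * f1 t - c2 * f2 t + (c3 * f3 t - c4 * f4 t)) x
    (c1 * l1 - c2 * l2 + (c3 * l3 - c4 * l4)).
Proof.
  intros H1 H2 H3 H4.
  apply (derivable_pt_lim_plus (fun t => c1 * f1 t - c2 * f2 t) (fun t => c3 * f3 t - c4 * f4 t));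
  apply (derivable_pt_lim_minus (fun t => _ * _ t) (fun t => _ * _ t));
  apply (derivable_pt_lim_scal); auto.
Qed.

Lemma derivC_lin al be f f' g g' :
  is_derivC f f' -> is_derivC g g' ->
  is_derivC (fun x => Cadd (Cmul al (f x)) (Cmul be (g x)))
            (fun x => Cadd (Cmul al (f' x)) (Cmul be (g' x))).
Proof.
  intros Hf Hg x. destruct (Hf x) as [A1 A2]; destruct (Hg x) as [B1 B2]. simpl. split.
  - apply (dpl_lin4 (fun t => Re (f t)) (fun t => Im (f t)) (fun t => Re (g t)) (fun t => Im (g t))); auto.
  - eapply dpl_ext; [ | | apply (dpl_lin4 (fun t => Im (f t)) (fun t => Re (f t)) (fun t => Im (g t)) (fun t => Re (g t)) x (Im (f' x)) (Re (f' x)) (Im (g' x)) (Re (g' x)) (Re al) (- Im al) (Re be) (- Im be)); eauto ].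
    intros; simpl; ring. ring.
Qed.

Lemma chain_lin al be D1 D2 : deriv_chain D1 -> deriv_chain D2 ->
  deriv_chain (fun j x => Cadd (Cmul al (D1 j x)) (Cmul be (D2 j x))).
Proof. intros H1 H2 k. apply derivC_lin; auto. Qed.

Lemma derivC_ext f g f' g' : (forall x, f x = g x) -> (forall x, f' x = g' x) -> is_derivC f f' -> is_derivC g g'.
Proof.
  intros E E' H x. destruct (H x) as [A B]. split; [eapply dpl_ext; [ | | exact A] | eapply dpl_ext; [ | | exact B]]; try intros; simpl; rewrite ?E, ?E'; auto.
Qed.

Lemma chain_ext D D' : deriv_chain D -> (forall j x, D j x = D' j x) -> deriv_chain D'.
Proof. intros H E k. eapply derivC_ext; [ | | apply H]; auto. Qed.

Lemma apply_ops_ext ls D D' : (forall j x, D j x = D' j x) -> forall j x, apply_ops ls D j x = apply_ops ls D' j x.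
Proof.
  induction ls; intros E j x; simpl; auto. unfold shift_op. rewrite !IHls; auto.
Qed.

Lemma apply_ops_lin ls al be D1 D2 : forall j x,
  apply_ops ls (fun j x => Cadd (Cmul al (D1 j x)) (Cmul be (D2 j x))) j x =
  Cadd (Cmul al (apply_ops ls D1 j x)) (Cmul be (apply_ops ls D2 j x)).
Proof.
  induction ls; intros j x; simpl; auto. unfold shift_op. rewrite !IHls. Ceq.
Qed.

Lemma inE_lin ls al be D1 D2 : in_E ls D1 -> in_E ls D2 ->
  in_E ls (fun j x => Cadd (Cmul al (D1 j x)) (Cmul be (D2 j x))).
Proof.
  intros [C1 Z1] [C2 Z2]; split. apply chain_lin; auto.
  intros x; rewrite apply_ops_lin, Z1, Z2. Ceq.
Qed.

Lemma inE_ext ls D D' : in_E ls D -> (forall j x, D j x = D' j x) -> in_E ls D'.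
Proof.
  intros [C Z] E; split. eapply chain_ext; eauto. intros x; rewrite <- (apply_ops_ext ls D D' E); auto.
Qed.

Lemma chain_shift l D : deriv_chain D -> deriv_chain (shift_op l D).
Proof.
  intros H. eapply chain_ext. apply (chain_lin Cone (Copp l) (fun j => D (S j)) D).
  intros k; apply H. auto. intros; unfold shift_op; Ceq.
Qed.

Lemma lams_S lam n : lams lam (S n) = lams lam n ++ lam (S n) :: nil.
Proof. unfold lams. rewrite (seq_S (S n)), map_app. reflexivity. Qed.

Lemma apply_ops_lams lam n D : (1 <= n)%nat -> forall j x,
  apply_ops (lams lam n) D j x = apply_ops (lams lam (n - 1)) (shift_op (lam n) D) j x.
Proof.
  intros Hn. destruct n as [|n']; [lia|]. replace (S n' - 1)%nat with n' by lia.
  intros; rewrite lams_S. unfold apply_ops. rewrite fold_right_app. reflexivity.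
Qed.

Lemma inE_shift lam n D : (1 <= n)%nat -> in_E (lams lam n) D -> in_E (lams lam (n-1)) (shift_op (lam n) D).
Proof.
  intros Hn [C Z]; split. apply chain_shift; auto. intros x; rewrite <- apply_ops_lams; auto.
Qed.

Lemma length_lams lam n : length (lams lam n) = S n.
Proof. unfold lams. rewrite length_map, length_seq. reflexivity. Qed.

Lemma chain_zero D : deriv_chain D -> (forall x, D 0%nat x = Czero) -> forall j x, D j x = Czero.
Proof.
  intros C Z j; induction j; intros x; auto.
  destruct (C j x) as [A B].
  assert (A0 : derivable_pt_lim (fun t => Re (D j t)) x 0).
  { eapply dpl_ext; [ | | apply (derivable_pt_lim_const 0 x)]; auto. intros; rewrite IHj; reflexivity. }
  assert (B0 : derivable_pt_lim (fun t => Im (D j t)) x 0).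
  { eapply dpl_ext; [ | | apply (derivable_pt_lim_const 0 x)]; auto. intros; rewrite IHj; reflexivity. }
  apply Cext; simpl; eapply uniqueness_limite; eauto.
Qed.

Lemma VAN ls A W pts mult : ECT ls A -> in_E ls W -> NoDup pts -> (forall x, In x pts -> A x) ->
  (forall x, In x pts -> forall j, (j < mult x)%nat -> W j x = Czero) ->
  (length ls - 1 < list_sum (map mult pts))%nat -> forall j x, W j x = Czero.
Proof.
  intros E HW ND HA HZ Hlt. apply chain_zero. apply HW.
  intros x. apply NNPP; intro Hx.
  assert (list_sum (map mult pts) <= length ls - 1)%nat.
  { eapply E; eauto. }
  lia.
Qed.

Lemma taylorT : forall m (f : nat -> R -> R) b,
  (forall j x, derivable_pt_lim (f j) x (f (S j) x)) -> (forall j, (j < m)%nat -> f j b = 0) ->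
  forall c eps delta, 0 <= eps -> (forall y, Rabs (y - b) < delta -> Rabs (f m y - c) <= eps) ->
  forall x, Rabs (x - b) < delta -> Rabs (f 0%nat x - c * (x - b) ^ m / INR (fact m)) <= eps * Rabs (x - b) ^ m.
Proof.
  induction m; intros f b Hd Hz c eps delta He Hb x Hx.
  - simpl. replace (f 0%nat x - c * 1 / 1) with (f 0%nat x - c) by field. rewrite Rmult_1_r. auto.
  - set (phi := fun y => f 0%nat y - c * (y - b) ^ S m / INR (fact (S m))).
    set (phi' := fun y => f 1%nat y - c * (y - b) ^ m / INR (fact m)).
    assert (IH : forall y, Rabs (y - b) < delta -> Rabs (phi' y) <= eps * Rabs (y - b) ^ m).
    { intros y Hy. refine (IHm (fun j => f (S j)) b (fun j => Hd (S j)) _ c eps delta He Hb y Hy). intros j Hj; apply Hz; lia. }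
    assert (Hf : INR (fact m) <> 0) by (apply not_0_INR, fact_neq_0).
    assert (D : forall y, derivable_pt_lim phi y (phi' y)).
    { intros y. unfold phi, phi'.
      assert (P : derivable_pt_lim (fun t => (t - b) ^ S m) y (INR (S m) * (y - b) ^ m)).
      { pose proof (derivable_pt_lim_comp (fun t => t - b) (fun t => t ^ S m) y 1 (INR (S m) * (y - b) ^ pred (S m))) as K.
        eapply dpl_ext; [ | | apply K]. intros; reflexivity. simpl; ring.
        eapply dpl_ext; [ | | apply (derivable_pt_lim_minus (fun t => t) (fct_cte b) y 1 0)]. intros; reflexivity. ring.
        apply derivable_pt_lim_id. apply derivable_pt_lim_const. apply derivable_pt_lim_pow. }
      eapply dpl_ext; [ | | apply (derivable_pt_lim_minus (f 0%nat) (fun t => (c / INR (fact (S m))) * (t - b) ^ S m))].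
      intros t; unfold minus_fct; unfold Rdiv; ring.
      2: apply Hd.
      2: apply (derivable_pt_lim_scal (fun t => (t - b) ^ S m)); exact P.
      rewrite fact_simpl, mult_INR. field. split; auto. apply not_0_INR; lia. }
    assert (Hphib : phi b = 0).
    { unfold phi. rewrite Hz by lia. replace (b - b) with 0 by ring. rewrite pow_i by lia. unfold Rdiv; ring. }
    change (Rabs (phi x) <= eps * Rabs (x - b) ^ S m).
    destruct (Rtotal_order x b) as [Hlt|[Heq|Hgt]].
    + destruct (MVT_cor2 phi phi' x b Hlt (fun c _ => D c)) as [z [Ez Hz']].
      rewrite Hphib in Ez. replace (phi x) with (- (phi' z * (b - x))) by lra.
      rewrite Rabs_Ropp, Rabs_mult.
      assert (Rabs (z - b) <= Rabs (x - b)) by (rewrite !Rabs_left by lra; lra).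
      assert (Rabs (b - x) = Rabs (x - b)) by (rewrite Rabs_minus_sym; auto).
      rewrite H0. simpl. rewrite (Rmult_comm (Rabs (x-b))), <- Rmult_assoc.
      apply Rmult_le_compat_r. apply Rabs_pos.
      eapply Rle_trans. apply IH. lra. apply Rmult_le_compat_l; auto. apply pow_incr. split; auto. apply Rabs_pos.
    + subst. rewrite Hphib, Rabs_R0. apply Rmult_le_pos; auto. apply pow_le, Rabs_pos.
    + destruct (MVT_cor2 phi phi' b x Hgt (fun c _ => D c)) as [z [Ez Hz']].
      rewrite Hphib in Ez. replace (phi x) with (phi' z * (x - b)) by lra.
      rewrite Rabs_mult.
      assert (Rabs (z - b) <= Rabs (x - b)) by (rewrite !Rabs_right by lra; lra).
      simpl. rewrite (Rmult_comm (Rabs (x-b))), <- Rmult_assoc.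
      apply Rmult_le_compat_r. apply Rabs_pos.
      eapply Rle_trans. apply IH. lra. apply Rmult_le_compat_l; auto. apply pow_incr. split; auto. apply Rabs_pos.
Qed.

Lemma cont_eps f b : continuity_pt f b -> forall e, 0 < e -> exists d, 0 < d /\
  forall y, Rabs (y - b) < d -> Rabs (f y - f b) <= e.
Proof.
  intros C e He. destruct (C e He) as [d [Hd H]]. exists d; split; auto.
  intros y Hy. destruct (Req_dec y b) as [->|Hne].
  - rewrite Rminus_diag, Rabs_R0; lra.
  - left. apply (H y). split. split. exact I. auto. simpl. unfold R_dist; auto.
Qed.

Lemma ratio_lim m (f : nat -> R -> R) b :
  (forall j x, derivable_pt_lim (f j) x (f (S j) x)) -> (forall j, (j < m)%nat -> f j b = 0) ->
  limit1_in (fun x => f 0%nat x / ((x - b) ^ m / INR (fact m))) (fun x => x <> b) (f m b) b.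
Proof.
  intros Hd Hz eps He.
  assert (HF : 0 < INR (fact m)) by (apply lt_0_INR, lt_O_fact).
  assert (Hc : continuity_pt (f m) b).
  { apply derivable_continuous_pt. exists (f (S m) b). apply Hd. }
  destruct (cont_eps _ _ Hc (eps / (2 * INR (fact m)))) as [d [Hd0 Hcd]].
  { apply Rdiv_lt_0_compat; lra. }
  exists d; split; auto. intros x [Hx Hxd]. simpl in Hxd; unfold R_dist in Hxd. simpl; unfold R_dist.
  assert (T := taylorT m f b Hd Hz (f m b) (eps / (2 * INR (fact m))) d
                 ltac:(left; apply Rdiv_lt_0_compat; lra) Hcd x Hxd).
  assert (Hxb : 0 < Rabs (x - b)) by (apply Rabs_pos_lt; lra).
  assert (Hp : 0 < Rabs (x - b) ^ m) by (apply pow_lt; auto).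
  assert (Ht : (x - b) ^ m <> 0) by (apply pow_nonzero; lra).
  replace (f 0%nat x / ((x - b) ^ m / INR (fact m)) - f m b) with
    ((f 0%nat x - f m b * (x - b) ^ m / INR (fact m)) * (INR (fact m) / (x - b) ^ m)) by (field; split; lra).
  rewrite Rabs_mult.
  replace (Rabs (INR (fact m) / (x - b) ^ m)) with (INR (fact m) / Rabs (x - b) ^ m).
  2:{ unfold Rdiv. rewrite Rabs_mult, Rabs_inv, (Rabs_right (INR _)), RPow_abs by lra. reflexivity. }
  eapply Rle_lt_trans. apply Rmult_le_compat_r. 2: exact T.
  left; apply Rdiv_lt_0_compat; lra.
  replace (eps / (2 * INR (fact m)) * Rabs (x - b) ^ m * (INR (fact m) / Rabs (x - b) ^ m)) with (eps / 2) by (field; lra).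
  lra.
Qed.

Lemma Cmod_le z : Cmod z <= Rabs (Re z) + Rabs (Im z).
Proof.
  unfold Cmod. pose proof (Rabs_pos (Re z)); pose proof (Rabs_pos (Im z)).
  rewrite <- (sqrt_square (Rabs (Re z) + Rabs (Im z))) by lra.
  apply sqrt_le_1_alt.
  assert (Re z * Re z = Rabs (Re z) * Rabs (Re z)) by (rewrite <- Rabs_mult, Rabs_right; nra).
  assert (Im z * Im z = Rabs (Im z) * Rabs (Im z)) by (rewrite <- Rabs_mult, Rabs_right; nra).
  nra.
Qed.

Lemma div_id1 z1 z2 w1 w2 t : t <> 0 ->
  z1 * (w1 / (w1 * w1 + w2 * w2)) - z2 * (- w2 / (w1 * w1 + w2 * w2)) =
  (z1 / t * (w1 / t) + z2 / t * (w2 / t)) * / (w1 / t * (w1 / t) + w2 / t * (w2 / t)).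
Proof.
  intros Ht. destruct (Req_dec (w1 * w1 + w2 * w2) 0) as [E|E].
  - assert (w1 = 0) by nra. assert (w2 = 0) by nra. subst. unfold Rdiv.
    replace (0 * 0 + 0 * 0) with 0 by ring. replace (0 * / t * (0 * / t) + 0 * / t * (0 * / t)) with 0 by ring.
    rewrite Rinv_0. ring.
  - assert (w1 / t * (w1 / t) + w2 / t * (w2 / t) <> 0).
    { replace (w1 / t * (w1 / t) + w2 / t * (w2 / t)) with ((w1 * w1 + w2 * w2) / (t * t)) by (field; auto).
      unfold Rdiv. apply Rmult_integral_contrapositive; split; auto. apply Rinv_neq_0_compat. apply Rmult_integral_contrapositive; auto. }
    field. repeat split; auto. 
Qed.

Lemma div_id2 z1 z2 w1 w2 t : t <> 0 ->
  z1 * (- w2 / (w1 * w1 + w2 * w2)) + z2 * (w1 / (w1 * w1 + w2 * w2)) =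
  (z2 / t * (w1 / t) - z1 / t * (w2 / t)) * / (w1 / t * (w1 / t) + w2 / t * (w2 / t)).
Proof.
  intros Ht. destruct (Req_dec (w1 * w1 + w2 * w2) 0) as [E|E].
  - assert (w1 = 0) by nra. assert (w2 = 0) by nra. subst. unfold Rdiv.
    replace (0 * 0 + 0 * 0) with 0 by ring. replace (0 * / t * (0 * / t) + 0 * / t * (0 * / t)) with 0 by ring.
    rewrite Rinv_0. ring.
  - assert (w1 / t * (w1 / t) + w2 / t * (w2 / t) <> 0).
    { replace (w1 / t * (w1 / t) + w2 / t * (w2 / t)) with ((w1 * w1 + w2 * w2) / (t * t)) by (field; auto).
      unfold Rdiv. apply Rmult_integral_contrapositive; split; auto. apply Rinv_neq_0_compat. apply Rmult_integral_contrapositive; auto. }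
    field. repeat split; auto. 
Qed.

Lemma limit_ext f g D l x0 : (forall x, D x -> f x = g x) -> limit1_in f D l x0 -> limit1_in g D l x0.
Proof.
  intros E H eps He. destruct (H eps He) as [a [Ha Hb]]. exists a; split; auto.
  intros x [Dx Hx]. rewrite <- E by auto. apply Hb; auto.
Qed.

Lemma Clim_ratio m F G b : deriv_chain F -> deriv_chain G ->
  (forall j, (j < m)%nat -> F j b = Czero) -> (forall j, (j < m)%nat -> G j b = Czero) ->
  G m b <> Czero ->
  Clim (fun x => Cdiv (F 0%nat x) (G 0%nat x)) b (Cdiv (F m b) (G m b)).
Proof.
  intros CF CG ZF ZG Hg.
  set (t := fun x => (x - b) ^ m / INR (fact m)).
  assert (LA1 := ratio_lim m (fun j x => Re (F j x)) b (fun j x => proj1 (CF j x))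
                   (fun j Hj => f_equal Re (ZF j Hj))).
  assert (LA2 := ratio_lim m (fun j x => Im (F j x)) b (fun j x => proj2 (CF j x))
                   (fun j Hj => f_equal Im (ZF j Hj))).
  assert (LB1 := ratio_lim m (fun j x => Re (G j x)) b (fun j x => proj1 (CG j x))
                   (fun j Hj => f_equal Re (ZG j Hj))).
  assert (LB2 := ratio_lim m (fun j x => Im (G j x)) b (fun j x => proj2 (CG j x))
                   (fun j Hj => f_equal Im (ZG j Hj))).
  simpl in LA1, LA2, LB1, LB2.
  pose proof (Cnz_norm _ Hg) as Hn.
  assert (Ld := limit_inv _ _ _ _ (limit_plus _ _ _ _ _ _ (limit_mul _ _ _ _ _ _ LB1 LB1) (limit_mul _ _ _ _ _ _ LB2 LB2)) Hn).
  assert (L1 := limit_mul _ _ _ _ _ _ (limit_plus _ _ _ _ _ _ (limit_mul _ _ _ _ _ _ LA1 LB1) (limit_mul _ _ _ _ _ _ LA2 LB2)) Ld).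
  assert (L2 := limit_mul _ _ _ _ _ _ (limit_minus _ _ _ _ _ _ (limit_mul _ _ _ _ _ _ LA2 LB1) (limit_mul _ _ _ _ _ _ LA1 LB2)) Ld).
  intros eps He.
  destruct (L1 (eps / 2) ltac:(lra)) as [d1 [Hd1 H1]].
  destruct (L2 (eps / 2) ltac:(lra)) as [d2 [Hd2 H2]].
  exists (Rmin d1 d2); split. apply Rmin_pos; lra.
  intros x Hx Hxd.
  assert (Ht : (x - b) ^ m / INR (fact m) <> 0).
  { unfold Rdiv. apply Rmult_integral_contrapositive; split. apply pow_nonzero; lra.
    apply Rinv_neq_0_compat, not_0_INR, fact_neq_0. }
  assert (Hx1 : dist R_met x b < d1). { simpl. unfold R_dist. pose proof (Rmin_l d1 d2); lra. }
  assert (Hx2 : dist R_met x b < d2). { simpl. unfold R_dist. pose proof (Rmin_r d1 d2); lra. }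
  specialize (H1 x (conj Hx Hx1)).
  specialize (H2 x (conj Hx Hx2)).
  simpl in H1, H2; unfold R_dist in H1, H2.
  eapply Rle_lt_trans. apply Cmod_le.
  unfold Cdiv, Csub, Cadd, Copp, Cmul, Cinv. simpl.
  rewrite (div_id1 _ _ _ _ _ Ht), (div_id2 _ _ _ _ _ Ht).
  set (r1 := Re (F m b) * (Re (G m b) / (Re (G m b) * Re (G m b) + Im (G m b) * Im (G m b))) -
    Im (F m b) * (- Im (G m b) / (Re (G m b) * Re (G m b) + Im (G m b) * Im (G m b)))).
  set (r2 := Re (F m b) * (- Im (G m b) / (Re (G m b) * Re (G m b) + Im (G m b) * Im (G m b))) +
    Im (F m b) * (Re (G m b) / (Re (G m b) * Re (G m b) + Im (G m b) * Im (G m b)))).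
  assert (E1 : r1 = (Re (F m b) * Re (G m b) + Im (F m b) * Im (G m b)) *
                    / (Re (G m b) * Re (G m b) + Im (G m b) * Im (G m b))) by (unfold r1; field; auto).
  assert (E2 : r2 = (Im (F m b) * Re (G m b) - Re (F m b) * Im (G m b)) *
                    / (Re (G m b) * Re (G m b) + Im (G m b) * Im (G m b))) by (unfold r2; field; auto).
  rewrite E1, E2. unfold Rminus in *. lra.
Qed.

Lemma lin_d a p e x : derivable_pt_lim (fun t => (t - a) * p + e) x p.
Proof.
  intros eps He. exists (mkposreal 1 Rlt_0_1). intros h Hh _.
  replace (((x + h - a) * p + e - ((x - a) * p + e)) / h - p) with 0 by (field; auto).
  rewrite Rabs_R0; lra.
Qed.

Lemma derivE lam a : is_derivC (fun x => Cexp (Cmul (RtoC (x - a)) lam))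
                               (fun x => Cmul lam (Cexp (Cmul (RtoC (x - a)) lam))).
Proof.
  intros x. set (p := Re lam); set (q := Im lam).
  assert (U : derivable_pt_lim (fun t => (t - a) * p - 0 * q) x p).
  { eapply dpl_ext; [ | | apply (lin_d a p (- (0 * q)))]. intros; simpl; ring. reflexivity. }
  assert (V : derivable_pt_lim (fun t => (t - a) * q + 0 * p) x q).
  { apply lin_d. }
  assert (EU := derivable_pt_lim_comp _ exp x _ _ U (derivable_pt_lim_exp _)).
  assert (CV := derivable_pt_lim_comp _ cos x _ _ V (derivable_pt_lim_cos _)).
  assert (SV := derivable_pt_lim_comp _ sin x _ _ V (derivable_pt_lim_sin _)).
  simpl. fold p q. split.
  - eapply dpl_ext; [ | | apply (derivable_pt_lim_mult _ _ x _ _ EU CV)].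
    intros; reflexivity. unfold comp. ring.
  - eapply dpl_ext; [ | | apply (derivable_pt_lim_mult _ _ x _ _ EU SV)].
    intros; reflexivity. unfold comp. ring.
Qed.

Definition fexp (lam : Cx) (a : R) (j : nat) (x : R) : Cx :=
  Cmul (Cpow lam j) (Cexp (Cmul (RtoC (x - a)) lam)).

Lemma fexp_chain lam a : deriv_chain (fexp lam a).
Proof.
  intros j. unfold fexp.
  eapply derivC_ext; [ | | apply (derivC_lin (Cpow lam j) Czero _ _ _ _ (derivE lam a) (derivE lam a))].
  intros; simpl. Ceq. intros; simpl. Ceq.
Qed.

Lemma VAN2 ls W a b ka kb : ECT ls (fun x => x = a \/ x = b) -> in_E ls W -> a <> b ->
  (forall j, (j < ka)%nat -> W j a = Czero) -> (forall j, (j < kb)%nat -> W j b = Czero) ->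
  (length ls - 1 < ka + kb)%nat -> forall j x, W j x = Czero.
Proof.
  intros E HW Hab Za Zb Hl.
  apply (VAN ls _ W (a :: b :: nil) (fun x => if Req_dec_T x a then ka else kb) E HW).
  - constructor. simpl; intros [H|[]]; auto. constructor. simpl; tauto. constructor.
  - simpl; intros x [H|[H|[]]]; subst; auto.
  - simpl; intros x [H|[H|[]]] j Hj; subst.
    + destruct (Req_dec_T x x); [auto | congruence].
    + destruct (Req_dec_T x a); [congruence | auto].
  - simpl. destruct (Req_dec_T a a); [ | congruence]. destruct (Req_dec_T b a); [congruence|]. lia.
Qed.

Lemma apply_ops_zero ls : forall j x, apply_ops ls (fun _ _ => Czero) j x = Czero.
Proof. induction ls; intros; simpl; auto. unfold shift_op; rewrite !IHls. Ceq. Qed.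

Lemma Csum_lin (c : nat -> Cx) (A B : nat -> Cx) l N :
  Csub (Csum (fun i => Cmul (c i) (A i)) N) (Cmul l (Csum (fun i => Cmul (c i) (B i)) N)) =
  Csum (fun i => Cmul (c i) (Csub (A i) (Cmul l (B i)))) N.
Proof.
  induction N; simpl. Ceq. rewrite <- IHN. Ceq.
Qed.

Lemma telesc n (cc dd q H : nat -> Cx) : (1 <= n)%nat -> cc 0%nat = Cone ->
  (forall i, cc (S i) = Copp (Cmul (cc i) (dd i))) -> H 0%nat = Cmul (dd 0%nat) (q 0%nat) ->
  (forall i, (S i < n)%nat -> H (S i) = Cadd (q i) (Cmul (dd (S i)) (q (S i)))) ->
  H n = q (n - 1)%nat ->
  Cadd (H 0%nat) (Csum (fun i => Cmul (cc (S i)) (H (S i))) n) = Czero.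
Proof.
  intros Hn c0 cS H0 HS Hnn.
  assert (C : forall N, (N <= n - 1)%nat -> Cadd (H 0%nat) (Csum (fun i => Cmul (cc (S i)) (H (S i))) N) =
                                       Cmul (Cmul (cc N) (dd N)) (q N)).
  { induction N; intros HN; simpl.
    - rewrite H0, c0. Ceq.
    - replace (Cadd (H 0%nat) (Cadd (Csum (fun i => Cmul (cc (S i)) (H (S i))) N) (Cmul (cc (S N)) (H (S N)))))
        with (Cadd (Cadd (H 0%nat) (Csum (fun i => Cmul (cc (S i)) (H (S i))) N)) (Cmul (cc (S N)) (H (S N)))) by Ceq.
      rewrite IHN by lia. rewrite HS by lia. rewrite cS. Ceq. }
  destruct n as [|n']; [lia|]. simpl.
  replace (Cadd (H 0%nat) (Cadd (Csum (fun i => Cmul (cc (S i)) (H (S i))) n') (Cmul (cc (S n')) (H (S n')))))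
    with (Cadd (Cadd (H 0%nat) (Csum (fun i => Cmul (cc (S i)) (H (S i))) n')) (Cmul (cc (S n')) (H (S n')))) by Ceq.
  rewrite C by lia. rewrite Hnn, cS. replace (S n' - 1)%nat with n' by lia. Ceq.
Qed.

Lemma Cdiv_mul_r x q : q <> Czero -> Cmul (Cdiv x q) q = x.
Proof. intros Hq. unfold Cdiv. rewrite Cmul_assoc, (Cmul_comm (Cinv q)), Cmul_inv_r by auto. apply Cmul_1_r. Qed.

Lemma fexp0a l a : fexp l a 0%nat a = Cone.
Proof.
  unfold fexp. apply Cext; simpl;
  replace ((a - a) * Re l - 0 * Im l) with 0 by ring; replace ((a - a) * Im l + 0 * Re l) with 0 by ring;
  rewrite exp_0, cos_0, sin_0; ring.
Qed.

Theorem mainTheorem10 (lam : nat -> Cx) (n : nat) (a b : R)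
  (P Q : nat -> nat -> R -> Cx) :
  (1 <= n)%nat -> a <> b ->
  ECT (lams lam n) (fun x => x = a \/ x = b) ->
  ECT (lams lam (n - 1)) (fun x => x = a \/ x = b) ->
  bernstein_basis (lams lam n) a b P ->
  bernstein_basis (lams lam (n - 1)) a b Q ->
  exists d : nat -> Cx,
    (forall k, (k < n)%nat ->
       Clim (fun x => Cdiv (P k 1%nat x) (Q k 0%nat x)) b (d k) /\ d k <> Czero) /\
    (forall x : R,
       Cexp (Cmul (RtoC (x - a)) (lam n)) =
       Cadd (P 0%nat 0%nat x)
            (Csum (fun i => Cmul (Cmul (Cpow (Copp Cone) (S i)) (Cprod_from d 0 (S i)))
                                 (P (S i) 0%nat x)) n)) /\
    (forall k, (1 <= k)%nat -> (k <= n - 1)%nat ->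
       Cprod_from d 0 k =
       Cmul (Cmul (Cpow (Copp Cone) n)
                  (Cdiv (Cexp (Cmul (RtoC (b - a)) (lam n))) (P n 0%nat b)))
            (Cinv (Cprod_from d k (n - k)))).
Proof.
  intros Hn Hab En En1 BP BQ.
  unfold bernstein_basis in BP, BQ. rewrite length_lams in BP, BQ.
  replace (S n - 1)%nat with n in BP by lia.
  replace (S (n - 1) - 1)%nat with (n - 1)%nat in BQ by lia.
  assert (Pin : forall k, (k <= n)%nat -> in_E (lams lam n) (P k)) by (intros k Hk; apply (BP k Hk)).
  assert (PZa : forall k j, (k <= n)%nat -> (j < k)%nat -> P k j a = Czero)
    by (intros k j Hk Hj; apply (BP k Hk); auto).
  assert (PZb : forall k j, (k <= n)%nat -> (j < n - k)%nat -> P k j b = Czero)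
    by (intros k j Hk Hj; apply (BP k Hk); auto).
  assert (PNb : forall k, (k <= n)%nat -> P k (n - k)%nat b <> Czero) by (intros k Hk; apply (BP k Hk)).
  assert (Pa1 : forall k, (k <= n)%nat -> P k k a = Cone) by (intros k Hk; apply (BP k Hk)).
  assert (Qin : forall k, (k <= n - 1)%nat -> in_E (lams lam (n - 1)) (Q k)) by (intros k Hk; apply (BQ k Hk)).
  assert (QZa : forall k j, (k <= n - 1)%nat -> (j < k)%nat -> Q k j a = Czero)
    by (intros k j Hk Hj; apply (BQ k Hk); auto).
  assert (QZb : forall k j, (k <= n - 1)%nat -> (j < n - 1 - k)%nat -> Q k j b = Czero)
    by (intros k j Hk Hj; apply (BQ k Hk); auto).
  assert (QNb : forall k, (k <= n - 1)%nat -> Q k (n - 1 - k)%nat b <> Czero) by (intros k Hk; apply (BQ k Hk)).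
  assert (Qa1 : forall k, (k <= n - 1)%nat -> Q k k a = Cone) by (intros k Hk; apply (BQ k Hk)).
  set (d := fun k => Cdiv (P k (n - k)%nat b) (Q k (n - 1 - k)%nat b)).
  assert (Hdnz : forall k, (k < n)%nat -> d k <> Czero).
  { intros k Hk. unfold d, Cdiv. apply Cmul_nz. apply PNb; lia. apply Cinv_nz, QNb; lia. }
  exists d.
  assert (Part1 : forall k, (k < n)%nat ->
       Clim (fun x => Cdiv (P k 1%nat x) (Q k 0%nat x)) b (d k) /\ d k <> Czero).
  { intros k Hk. split; auto.
    assert (L := Clim_ratio (n - 1 - k) (fun j => P k (S j)) (Q k) b
                   (fun j => proj1 (Pin k ltac:(lia)) (S j)) (proj1 (Qin k ltac:(lia)))
                   (fun j Hj => PZb k (S j) ltac:(lia) ltac:(lia))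
                   (fun j Hj => QZb k j ltac:(lia) Hj) (QNb k ltac:(lia))).
    unfold d. replace (n - k)%nat with (S (n - 1 - k)) by lia. exact L. }
  split; [exact Part1|].
  assert (Hq : forall k, (k < n)%nat -> Cmul (d k) (Q k (n - 1 - k)%nat b) = P k (n - k)%nat b).
  { intros k Hk. unfold d. apply Cdiv_mul_r, QNb; lia. }
  assert (LEN : (length (lams lam (n - 1)) - 1 < n)%nat) by (rewrite length_lams; lia).
  assert (D0 : forall j x, shift_op (lam n) (P 0%nat) j x = Cmul (d 0%nat) (Q 0%nat j x)).
  { set (W := fun j x => Csub (shift_op (lam n) (P 0%nat) j x) (Cmul (d 0%nat) (Q 0%nat j x))).
    assert (HW : in_E (lams lam (n - 1)) W).
    { eapply inE_ext. apply (inE_lin _ Cone (Copp (d 0%nat)) (shift_op (lam n) (P 0%nat)) (Q 0%nat)). apply inE_shift; [lia | apply Pin; lia].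
      apply Qin; lia. intros; unfold W; Ceq. }
    assert (Z := VAN2 _ W a b 0 n En1 HW Hab (fun j Hj => ltac:(exfalso; lia))).
    intros j x. apply Csub_eq0. apply Z; [|lia]. clear j x. intros j Hj. unfold W, shift_op.
    destruct (Nat.eq_dec j (n - 1)) as [->|Hne].
    - rewrite (PZb 0%nat (n - 1)%nat) by lia. pose proof (Hq 0%nat ltac:(lia)) as H0.
      rewrite !Nat.sub_0_r in H0. rewrite H0. replace (S (n - 1)) with n by lia. Ceq.
    - rewrite (PZb 0%nat j), (PZb 0%nat (S j)), (QZb 0%nat j) by lia. Ceq. }
  assert (Dmid : forall i j x, (1 <= i)%nat -> (i <= n - 1)%nat ->
     shift_op (lam n) (P i) j x = Cadd (Q (i - 1)%nat j x) (Cmul (d i) (Q i j x))).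
  { intros i j0 x0 Hi1 Hi2.
    set (W := fun j x => Csub (shift_op (lam n) (P i) j x) (Cadd (Q (i - 1)%nat j x) (Cmul (d i) (Q i j x)))).
    assert (HW : in_E (lams lam (n - 1)) W).
    { eapply inE_ext. apply (inE_lin _ Cone (Copp Cone) (shift_op (lam n) (P i)) (fun j x => Cadd (Cmul Cone (Q (i - 1)%nat j x)) (Cmul (d i) (Q i j x)))). apply inE_shift; [lia | apply Pin; lia].
      apply (inE_lin _ Cone (d i)); apply Qin; lia. intros; unfold W; Ceq. }
    assert (Z := VAN2 _ W a b i (n - i) En1 HW Hab).
    apply Csub_eq0. apply Z; [ | | lia]; clear j0 x0; intros j Hj; unfold W, shift_op.
    - destruct (Nat.eq_dec j (i - 1)) as [->|Hne].
      + replace (S (i - 1)) with i by lia. rewrite Pa1, (PZa i (i - 1)%nat), Qa1, (QZa i (i - 1)%nat) by lia. Ceq.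
      + rewrite (PZa i j), (PZa i (S j)), (QZa i j), (QZa (i - 1)%nat j) by lia. Ceq.
    - destruct (Nat.eq_dec j (n - 1 - i)) as [->|Hne].
      + rewrite Hq by lia. replace (S (n - 1 - i)) with (n - i)%nat by lia.
        rewrite (PZb i (n - 1 - i)%nat), (QZb (i - 1)%nat (n - 1 - i)%nat) by lia. Ceq.
      + rewrite (PZb i j), (PZb i (S j)), (QZb i j), (QZb (i - 1)%nat j) by lia. Ceq. }
  assert (Dn : forall j x, shift_op (lam n) (P n) j x = Q (n - 1)%nat j x).
  { set (W := fun j x => Csub (shift_op (lam n) (P n) j x) (Q (n - 1)%nat j x)).
    assert (HW : in_E (lams lam (n - 1)) W).
    { eapply inE_ext. apply (inE_lin _ Cone (Copp Cone) (shift_op (lam n) (P n)) (Q (n - 1)%nat)). apply inE_shift; [lia | apply Pin; lia].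
      apply Qin; lia. intros; unfold W; Ceq. }
    assert (Z := VAN2 _ W a b n 0 En1 HW Hab).
    intros j x. apply Csub_eq0. apply Z; [ | | lia]; clear j x; intros j Hj; [|exfalso; lia]. unfold W, shift_op.
    destruct (Nat.eq_dec j (n - 1)) as [->|Hne].
    - replace (S (n - 1)) with n by lia. rewrite Pa1, (PZa n (n - 1)%nat), Qa1 by lia. Ceq.
    - rewrite (PZa n j), (PZa n (S j)), (QZa (n - 1)%nat j) by lia. Ceq. }
  set (c := fun i => Cmul (Cpow (Copp Cone) i) (Cprod_from d 0 i)).
  assert (c0 : c 0%nat = Cone) by (unfold c; simpl; Ceq).
  assert (cS : forall i, c (S i) = Copp (Cmul (c i) (d i))).
  { intros i. unfold c. rewrite Cprod_last. simpl Cpow. simpl Nat.add. Ceq. }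
  assert (TL : forall j x, Cadd (shift_op (lam n) (P 0%nat) j x)
       (Csum (fun i => Cmul (c (S i)) (shift_op (lam n) (P (S i)) j x)) n) = Czero).
  { intros j x. apply (telesc n c d (fun i => Q i j x) (fun i => shift_op (lam n) (P i) j x) Hn c0 cS (D0 j x)).
    intros i Hi. pose proof (Dmid (S i) j x ltac:(lia) ltac:(lia)) as H. replace (S i - 1)%nat with i in H by lia. exact H. exact (Dn j x). }
  set (g := fun j x => Csub (fexp (lam n) a j x)
              (Cadd (P 0%nat j x) (Csum (fun i => Cmul (c (S i)) (P (S i) j x)) n))).
  assert (SC : forall N, (N <= n)%nat -> deriv_chain (fun j x => Csum (fun i => Cmul (c (S i)) (P (S i) j x)) N)).
  { induction N; intros HN.
    - eapply chain_ext. apply (chain_lin Czero Czero (P 0%nat) (P 0%nat)); apply Pin; lia.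
      intros; simpl; Ceq.
    - eapply chain_ext. apply (chain_lin Cone (c (S N)) (fun j x => Csum (fun i => Cmul (c (S i)) (P (S i) j x)) N) (P (S N)) (IHN ltac:(lia))). apply Pin; lia.
      intros; simpl; Ceq. }
  assert (gC : deriv_chain g).
  { eapply chain_ext. apply (chain_lin Cone (Copp Cone) (fexp (lam n) a) (fun j x => Cadd (Cmul Cone (P 0%nat j x)) (Cmul Cone (Csum (fun i => Cmul (c (S i)) (P (S i) j x)) n))) (fexp_chain (lam n) a)).
    apply (chain_lin Cone Cone (P 0%nat)). apply Pin; lia. apply SC; lia.
    intros; unfold g; Ceq. }
  assert (SZ : forall j x, shift_op (lam n) g j x = Czero).
  { intros j x.
    assert (F0 : Csub (fexp (lam n) a (S j) x) (Cmul (lam n) (fexp (lam n) a j x)) = Czero)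
      by (unfold fexp; simpl Cpow; Ceq).
    pose proof (Csum_lin (fun i => c (S i)) (fun i => P (S i) (S j) x) (fun i => P (S i) j x) (lam n) n) as SL.
    cbv beta in SL.
    pose proof (TL j x) as T. unfold shift_op in T. rewrite <- SL in T.
    unfold shift_op, g.
    transitivity (Csub (Csub (fexp (lam n) a (S j) x) (Cmul (lam n) (fexp (lam n) a j x)))
      (Cadd (Csub (P 0%nat (S j) x) (Cmul (lam n) (P 0%nat j x)))
        (Csub (Csum (fun i => Cmul (c (S i)) (P (S i) (S j) x)) n)
              (Cmul (lam n) (Csum (fun i => Cmul (c (S i)) (P (S i) j x)) n))))).
    { generalize (fexp (lam n) a (S j) x) (fexp (lam n) a j x)
        (Csum (fun i => Cmul (c (S i)) (P (S i) (S j) x)) n) (Csum (fun i => Cmul (c (S i)) (P (S i) j x)) n).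
      intros; Ceq. }
    rewrite F0, T. Ceq. }
  assert (ga : forall j, g j a = Czero).
  { induction j.
    - unfold g. rewrite fexp0a, Pa1 by lia. rewrite Csum_zero. Ceq.
      intros i Hi. rewrite PZa by lia. apply Cmul_0_r.
    - pose proof (SZ j a) as H. unfold shift_op in H. rewrite IHj, Cmul_0_r in H.
      apply Csub_eq0 in H. exact H. }
  assert (gE : in_E (lams lam n) g).
  { split; auto. intros x. rewrite apply_ops_lams by auto.
    rewrite (apply_ops_ext _ _ (fun _ _ => Czero) SZ). apply apply_ops_zero. }
  assert (GZ : forall j x, g j x = Czero).
  { apply (VAN (lams lam n) _ g (a :: nil) (fun _ => S n) En gE).
    constructor; [simpl; tauto | constructor].
    simpl; intros x [H|[]]; auto.
    simpl; intros x [H|[]] j Hj; subst; apply ga.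
    simpl. unfold lams. rewrite length_map, length_seq. lia. }
  assert (MAIN : forall x, Cexp (Cmul (RtoC (x - a)) (lam n)) =
              Cadd (P 0%nat 0%nat x) (Csum (fun i => Cmul (c (S i)) (P (S i) 0%nat x)) n)).
  { intros x. pose proof (GZ 0%nat x) as H. unfold g in H. apply Csub_eq0 in H.
    rewrite <- H. unfold fexp. simpl Cpow. Ceq. }
  split; [exact MAIN|].
  intros k Hk1 Hk2.
  assert (Eb : Cexp (Cmul (RtoC (b - a)) (lam n)) = Cmul (c n) (P n 0%nat b)).
  { rewrite MAIN. destruct n as [|n']; [lia|]. simpl Csum.
    rewrite Csum_zero. rewrite (PZb 0%nat 0%nat) by lia. Ceq.
    intros i Hi. rewrite PZb by lia. apply Cmul_0_r. }
  assert (Hpn : P n 0%nat b <> Czero).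
  { pose proof (PNb n ltac:(lia)) as H. rewrite Nat.sub_diag in H. exact H. }
  assert (HB : Cprod_from d k (n - k) <> Czero).
  { apply Cprod_nz. intros i Hi. apply Hdnz. lia. }
  rewrite Eb. unfold c.
  replace (Cprod_from d 0 n) with (Cmul (Cprod_from d 0 k) (Cprod_from d k (n - k))).
  2:{ rewrite <- Cprod_split. f_equal. lia. }
  rewrite Cdiv_mul_cancel by auto.
  transitivity (Cmul (Cmul (Cpow (Copp Cone) n) (Cpow (Copp Cone) n))
                  (Cmul (Cprod_from d 0 k) (Cmul (Cprod_from d k (n - k)) (Cinv (Cprod_from d k (n - k)))))).
  rewrite sign_sq, Cmul_inv_r by auto. Ceq.
  generalize (Cpow (Copp Cone) n) (Cprod_from d 0 k) (Cprod_from d k (n - k)). intros. Ceq.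
Qed.
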